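(* Suppose $R$ is not a local multiplicative hyperring. Then a hyperideal $I$ of $R$ is 1-absorbing primary if and only if $I$ is a primary hyperideal of $R$.
   Context: Throughout, $R$ is a commutative multiplicative hyperring ($(R,+)$ abelian group, $\circ$ a commutative associative hyperoperation into nonempty subsets, $a\circ(b+c)\subseteq a\circ b+a\circ c$, $a\circ(-b)=(-a)\circ b=-(a\circ b)$; $A\circ B=\bigcup a\circ b$), with identity $1$ ($a\in a\circ 1$); $x$ is a unit if $1\in x\circ y$ for some $y$. All hyperideals are $\mathbf{C}$-hyperideals (for any finite product $A=r_1\circ\cdots\circ r_n$, $A\cap I\neq\emptyset\Rightarrow A\subseteq I$). $\sqrt I=\{r:r^n\subseteq I\text{ for some }n\}$. Primary hyperideal: nonzero proper $Q$ with $x\circ y\subseteq Q\Rightarrow x\in Q$ or $y\in\sqrt Q$. 1-absorbing primary hyperideal: proper $I$ such that for all nonunit $x,y,z$, $x\circ y\circ z\subseteq I$ implies $x\circ y\subseteq I$ or $z\in\sqrt I$. $R$ is local if it has a unique maximal hyperideal. *)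

(* Defs.v *)
From mathcomp Require Import all_boot all_algebra.
Set Implicit Arguments. Unset Strict Implicit. Unset Printing Implicit Defensive.
Import GRing.Theory.
Local Open Scope ring_scope.

Definition hsubset (T : Type) (A B : T -> Prop) := forall x, A x -> B x.

Definition hset_mul (T : Type) (m : T -> T -> T -> Prop) (A B : T -> Prop) : T -> Prop :=
  fun x => exists a b, A a /\ B b /\ m a b x.

Definition sing (T : Type) (a : T) : T -> Prop := fun x => x = a.

(* Commutative multiplicative hyperring with identity, over the abelian
   group (R,+). [hmul a b] is the (nonempty) set a ∘ b. *)
Record hyperring (R : zmodType) := HyperRing {
  hmul : R -> R -> R -> Prop;
  hone : R;
  hmul_nonempty : forall a b, exists x, hmul a b x;
  hmul_comm : forall a b x, hmul a b x <-> hmul b a x;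
  hmul_assoc : forall a b c x,
    hset_mul hmul (hmul a b) (sing c) x <-> hset_mul hmul (sing a) (hmul b c) x;
  hmul_distr : forall a b c x, hmul a (b + c) x ->
    exists u v, hmul a b u /\ hmul a c v /\ x = u + v;
  hmul_oppr : forall a b x, hmul a (- b) x <-> hmul a b (- x);
  hmul_oppl : forall a b x, hmul (- a) b x <-> hmul a b (- x);
  hmul_one : forall a, hmul a hone a
}.

Section Defs.
Variables (R : zmodType) (H : hyperring R).

Local Notation "a ** b" := (hmul H a b) (at level 40).

Fixpoint hprodl (A : R -> Prop) (s : seq R) : R -> Prop :=
  match s with
  | [::] => A
  | r :: s' => hprodl (hset_mul (hmul H) A (sing r)) s'
  end.
Definition hprod (r : R) (s : seq R) : R -> Prop := hprodl (sing r) s.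

(* r^n for n >= 1: hpow r n = r^(n.+1) *)
Definition hpow (r : R) (n : nat) : R -> Prop := hprod r (nseq n r).

Definition is_unit (x : R) : Prop := exists y, hmul H x y (hone H).

(* hyperideals: nonempty additive subgroup absorbing hypermultiplication,
   which are moreover C-hyperideals (standing convention of the paper). *)
Definition C_condition (I : R -> Prop) : Prop :=
  forall (r : R) (s : seq R),
    (exists x, hprod r s x /\ I x) -> hsubset (hprod r s) I.

Definition hyperideal (I : R -> Prop) : Prop :=
  [/\ exists a, I a,
      (forall a b, I a -> I b -> I (a - b)),
      (forall r a, I a -> hsubset (hmul H r a) I)
    & C_condition I].

Definition proper (I : R -> Prop) : Prop := exists r, ~ I r.
Definition nonzero (I : R -> Prop) : Prop := exists x, I x /\ x <> 0.

Definition hradical (I : R -> Prop) : R -> Prop :=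
  fun r => exists n, hsubset (hpow r n) I.

Definition primary (Q : R -> Prop) : Prop :=
  [/\ hyperideal Q, nonzero Q, proper Q &
      forall x y, hsubset (hmul H x y) Q -> Q x \/ hradical Q y].

Definition one_absorbing_primary (I : R -> Prop) : Prop :=
  [/\ hyperideal I, proper I &
      forall x y z, ~ is_unit x -> ~ is_unit y -> ~ is_unit z ->
        hsubset (hset_mul (hmul H) (hmul H x y) (sing z)) I ->
        hsubset (hmul H x y) I \/ hradical I z].

Definition maximal (M : R -> Prop) : Prop :=
  [/\ hyperideal M, proper M &
      forall J, hyperideal J -> hsubset M J ->
        (forall x, J x <-> M x) \/ (forall x, J x)].

Definition local : Prop :=
  exists M, maximal M /\ forall N, maximal N -> forall x, N x <-> M x.

End Defs.

(* Main.v *)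
Require Import Defs.
From mathcomp Require Import all_boot all_algebra.
From Stdlib Require Import Classical.

Section Aux.
Variables (R : zmodType) (H : hyperring R).

Lemma unit_absorb (I : R -> Prop) u u' v :
  hyperideal H I -> hmul H u u' (hone H) -> hsubset (hmul H u v) I -> I v.
Proof.
move=> [_ _ Habs _] Hu Hs.
have h : hset_mul (hmul H) (hmul H u' u) (sing v) v.
  exists (hone H), v; split; first by apply/hmul_comm.
  split; first by []. by apply/hmul_comm; apply: hmul_one.
move/hmul_assoc: h => [a [b [Ha [Hb Hm]]]].
rewrite /sing in Ha; subst a.
exact: (Habs u' b (Hs b Hb) v Hm).
Qed.

Lemma unit_all (J : R -> Prop) u :
  hyperideal H J -> J u -> is_unit H u -> forall r, J r.
Proof.
move=> HJ Ju [u' Hu] r.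
case: HJ => [_ _ Habs _].
have J1 : J (hone H) by apply: (Habs u' u Ju); apply/hmul_comm.
exact: (Habs r _ J1 r (hmul_one H r)).
Qed.

End Aux.
Arguments unit_absorb {R H I u u' v}.
Arguments unit_all {R H J u}.

Theorem mainTheorem7 (R : zmodType) (H : hyperring R) (I : R -> Prop) :
  ~ local H -> hyperideal H I -> nonzero I ->
  (one_absorbing_primary H I <-> primary H I).
Proof.
move=> Hnl HI Hnz; split.
- move=> [_ Hpr Habs1]; split => // x y Hxy.
  apply: NNPP => Hn.
  have nIx : ~ I x by move=> h; apply: Hn; left.
  have nry : ~ hradical H I y by move=> h; apply: Hn; right.
  have nux : ~ is_unit H x.
    move=> [x' Hx']. apply: nry; exists 0%N; rewrite /hpow /hprod /= /sing => w ->.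
    exact: (unit_absorb HI Hx' Hxy).
  have nuy : ~ is_unit H y.
    move=> [y' Hy']. apply: nIx.
    apply: (unit_absorb HI Hy') => w Hw; apply: Hxy; by apply/hmul_comm.
  case: (HI) => [[i0 Ii0] Hsub Habs HC].
  pose K := fun r => hsubset (hmul H r x) I.
  have Knu : forall a, ~ is_unit H a -> K a.
    move=> a Ha.
    have: hsubset (hmul H a x) I \/ hradical H I y.
      apply: Habs1 => // w Hw.
      move/hmul_assoc: Hw => [a' [b [Ha' [Hb Hm]]]].
      rewrite /sing in Ha'; subst a'.
      exact: (Habs a b (Hxy b Hb) w Hm).
    by case.
  have Kun : forall a, K a -> ~ is_unit H a.
    move=> a Ka [a' Ha']. apply: nIx. exact: (unit_absorb HI Ha' Ka).
  have K1 : ~ K (hone H).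
    move=> h; apply: nIx; apply: h; apply/hmul_comm; apply: hmul_one.
  have hK : hyperideal H K.
    split.
    + exists i0 => w Hw; apply: (Habs x i0 Ii0); by apply/hmul_comm.
    + move=> a b Ka Kb w Hw.
      move/hmul_comm: Hw => Hw.
      case: (hmul_distr Hw) => [u [v [Hu [Hv ->]]]].
      move/hmul_oppr: Hv => Hv.
      have := Hsub u (- v)%R (Ka u (proj1 (hmul_comm _ _ _ _) Hu)) (Kb _ (proj1 (hmul_comm _ _ _ _) Hv)).
      by rewrite GRing.opprK.
    + move=> r a Ka w Hw t Ht.
      have h : hset_mul (hmul H) (hmul H r a) (sing x) t.
        by exists w, x; split => //; split.
      move/hmul_assoc: h => [r' [b [Hr' [Hb Hm]]]].
      rewrite /sing in Hr'; subst r'.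
      exact: (Habs r b (Ka b Hb) t Hm).
    + move=> r s [w [Hw Kw]] b Hb t Ht.
      have Hcat : forall (A : R -> Prop) s, hsubset (hset_mul (hmul H) (hprodl H A s) (sing x))
                    (hprodl H A (s ++ [:: x])).
        move=> A0 s0; elim: s0 A0 => [|c s0 IH] A0 /=; first by [].
        exact: IH.
      have [t0 Ht0] := hmul_nonempty H w x.
      have Hall := HC r (s ++ [:: x]) (ex_intro _ t0 (conj (Hcat _ s t0 (ex_intro _ w (ex_intro _ x (conj Hw (conj (erefl x) Ht0))))) (Kw t0 Ht0))).
      apply: Hall. apply: Hcat. by exists b, x.
  apply: Hnl; exists K; split.
  + split => //; first by exists (hone H).
    move=> J HJ HKJ.
    case: (classic (exists u, J u /\ is_unit H u)) => [[u [Ju Uu]]|Hno].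
    * right; exact: (unit_all HJ Ju Uu).
    * left => r; split => [Jr|]; last exact: HKJ.
      apply: Knu => Ur; apply: Hno; by exists r.
  + move=> N [HN [r0 Nr0] Hmax] r.
    have HNK : hsubset N K.
      move=> a Na; apply: Knu => Ua; apply: Nr0; exact: (unit_all HN Na Ua).
    case: (Hmax K hK HNK) => [Heq|Hall]; first by move: (Heq r); tauto.
    by case: K1; apply: Hall.
- move=> [HI' _ Hpr Hprim]; split => // x y z _ _ _ Hs.
  case: (classic (hradical H I z)) => [h|h]; [by right|left].
  move=> a Ha.
  case: (Hprim a z) => // w Hw; apply: Hs; by exists a, z.
Qed.
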